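(* Let $p \geq 1$ and $N\in\mathbb{N}$. Let $\mu_1$ and $\mu_2$ be two permutation invariant Radon probability measures on $\mathbb{R}^N$ whose $p$:th moments are finite. Let $I\subset[N]$. If $f:\mathbb{R}^{|I|}\to\mathbb{R}$ is a bounded $1$-Lipschitz function with respect to the $\|\cdot\|_p$ norm, then \[ \left|\langle f\circ P_I\rangle_{\mu_1}-\langle f\circ P_I\rangle_{\mu_2}\right| \leq \left(\frac{|I|}{1-\frac{|I|}{N}}\right)^{1/p} w_p(\mu_1,\mu_2;N). \]
   Context: $[N]=\{1,\dots,N\}$ and $S_N$ is its permutation group. For $\pi\in S_N$, $Q_\pi:\mathbb{R}^N\to\mathbb{R}^N$ is $(Q_\pi x)_j=x_{\pi^{-1}(j)}$. A probability measure $\mu$ on $\mathbb{R}^N$ is permutation invariant if for every integrable $f$ and $\pi\in S_N$, $f\circ Q_\pi$ is integrable and $\langle f\circ Q_\pi\rangle_\mu=\langle f\rangle_\mu$. For $I\subset[N]$ with $n=|I|$, let $\pi_I:I\to[n]$ be the unique order-preserving bijection; $P_I:\mathbb{R}^N\to\mathbb{R}^n$ is $(P_Ix)_j=x_{\pi_I^{-1}(j)}$. The specific $p$-norm fluctuation distance is $w_p(\mu_1,\mu_2;N)=\left(\inf_\gamma\int\gamma(dx,dy)\frac1N\sum_{i=1}^N|x_i-y_i|^p\right)^{1/p}$, the infimum over all couplings $\gamma$ of $\mu_1,\mu_2$ (probability measures on $\mathbb{R}^N\times\mathbb{R}^N$ with marginals $\mu_1$ and $\mu_2$). A function is $1$-Lipschitz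 w.r.t. $\|\cdot\|_p$ if $|f(\phi)-f(\psi)|\le\|\phi-\psi\|_p$ for all $\phi,\psi$. *)

(* Defs.v *)
From HB Require Import structures.
From mathcomp Require Import all_boot all_order all_algebra all_fingroup.
From mathcomp Require Import all_classical all_reals all_analysis.
Set Implicit Arguments. Unset Strict Implicit. Unset Printing Implicit Defensive.
Import Order.TTheory GRing.Theory Num.Theory.
Local Open Scope classical_set_scope.
Local Open Scope ring_scope.

(* R^N is represented by N.-tuple R, with the product (= Borel) sigma-algebra
   of mathcomp-analysis (generated by the coordinate maps); coordinate i of x
   is tnth x i, indices are 'I_N = {0,...,N-1} (standing for [N]). *)

Definition Qperm (R : Type) (N : nat) (s : 'S_N) (x : N.-tuple R) : N.-tuple R :=
  [tuple tnth x ((s^-1)%g j) | j < N].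

(* (P_I x)_j = x_{pi_I^{-1}(j)}, pi_I : I -> [n] the order preserving bijection:
   enum_val j is the j-th element (0-based) of I listed in increasing order. *)
Definition PI (R : Type) (N : nat) (I : {set 'I_N}) (x : N.-tuple R)
  : #|I|.-tuple R :=
  [tuple tnth x (enum_val j) | j < #|I|].

Definition perm_invariant (R : realType) (N : nat)
    (mu : probability (N.-tuple R) R) : Prop :=
  forall (s : 'S_N) (f : N.-tuple R -> \bar R),
    mu.-integrable setT f ->
    mu.-integrable setT (f \o Qperm s) /\
    (\int[mu]_x (f \o Qperm s) x = \int[mu]_x f x)%E.

Definition finite_pmoment (R : realType) (N : nat) (p : R)
    (mu : probability (N.-tuple R) R) : Prop :=
  mu.-integrable setT (fun x : N.-tuple R => (\sum_(i < N) `|tnth x i| `^ p)%:E).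

Definition pdist (R : realType) (n : nat) (p : R) (x y : n.-tuple R) : R :=
  (\sum_(i < n) `|tnth x i - tnth y i| `^ p) `^ p^-1.

Definition lipschitz1_p (R : realType) (n : nat) (p : R) (f : n.-tuple R -> R)
  : Prop := forall x y : n.-tuple R, `|f x - f y| <= pdist p x y.

Definition is_coupling (R : realType) (N : nat)
    (mu1 mu2 : probability (N.-tuple R) R)
    (g : probability (N.-tuple R * N.-tuple R)%type R) : Prop :=
  pushforward g fst = mu1 /\ pushforward g snd = mu2.

Definition wp (R : realType) (N : nat) (p : R)
    (mu1 mu2 : probability (N.-tuple R) R) : \bar R :=
  ((ereal_inf [set (\int[g]_z
       ((N%:R)^-1 * \sum_(i < N) `|tnth z.1 i - tnth z.2 i| `^ p)%:E)%E
     | g in [set g | is_coupling mu1 mu2 g]]) `^ p^-1)%E.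

(* Main.v *)
Require Import Defs.
From HB Require Import structures.
From mathcomp Require Import all_boot all_order all_algebra all_fingroup.
From mathcomp Require Import all_classical all_reals all_analysis.
From mathcomp Require Import ring lra measurable_realfun.
Import Order.TTheory GRing.Theory Num.Theory.
Local Open Scope classical_set_scope.
Local Open Scope ring_scope.
Section aux.
Variable R : realType.

Lemma tangent_pow (p D l : R) : 1 <= p -> 0 <= D -> 0 < l ->
  D `^ p^-1 <= l `^ p^-1 * (D / (p * l) + (1 - p^-1)).
Proof.
move=> p1 D0 l0.
have p0 : 0 < p by apply: lt_le_trans p1.
have [->|pn1] := eqVneq p 1.
  by rewrite invr1 !powRr1 ?(ltW l0)// subrr addr0 mul1r mulrCA mulfV ?gt_eqF// mulr1.
have p1' : 1 < p by rewrite lt_neqAle eq_sym pn1.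
have ip1 : p^-1 < 1 by rewrite invf_lt1.
pose q := (1 - p^-1)^-1.
have q0 : 0 < q by rewrite invr_gt0 subr_gt0.
have pq : p^-1 + q^-1 = 1 by rewrite /q invrK addrC subrK.
have := @conjugate_powR R ((D / l) `^ p^-1) 1 p q (powR_ge0 _ _) ler01 p0 q0 pq.
rewrite mulr1 powR1 -powRrM mulVf ?(gt_eqF p0) // powRr1 ?(divr_ge0 D0 (ltW l0)) // => H.
have eD : D = l * (D / l) by rewrite mulrC divfK ?gt_eqF.
rewrite {1}eD powRM ?(divr_ge0 D0 (ltW l0)) ?(ltW l0)//.
rewrite ler_wpM2l ?powR_ge0//; apply: le_trans H _.
rewrite /q invrK mul1r lerD2r -mulrA (mulrC p) invfM mulrA //.
Qed.


Lemma sum_perm_const N (a : 'I_N -> R) (k : 'I_N) :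
  \sum_(s : 'S_N) a ((s^-1)%g k) = #|'S_N|%:R / N%:R * \sum_i a i.
Proof.
have N0 : (0 < N)%N by apply: (leq_ltn_trans (leq0n k)); exact: ltn_ord.
have e1 : forall k, \sum_(s : 'S_N) a ((s^-1)%g k) = \sum_(s : 'S_N) a (s k).
  by move=> k'; rewrite (reindex_inj invg_inj); apply: eq_bigr => s _; rewrite invgK.
have e2 : forall k k', \sum_(s : 'S_N) a (s k) = \sum_(s : 'S_N) a (s k').
  move=> k1 k2; rewrite (reindex_inj (mulgI (tperm k1 k2))).
  by apply: eq_bigr => s _; rewrite permM tpermL.
have e3 : N%:R * \sum_(s : 'S_N) a (s k) = #|'S_N|%:R * \sum_i a i.
  have -> : N%:R * \sum_(s : 'S_N) a (s k) = \sum_(k' < N) \sum_(s : 'S_N) a (s k).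
    by rewrite sumr_const card_ord mulr_natl.
  rewrite (eq_bigr (fun k' => \sum_(s : 'S_N) a (s k'))); last by move=> k' _; rewrite (e2 k' k).
  rewrite exchange_big /= (eq_bigr (fun _ => \sum_i a i)).
    by rewrite sumr_const mulr_natl.
  by move=> s _; rewrite [RHS](reindex_inj (@perm_inj _ s)).
have Nn0 : N%:R != 0 :> R by rewrite pnatr_eq0 -lt0n.
rewrite e1; apply: (mulfI Nn0); rewrite e3 mulrA mulrCA mulfV // mulr1; reflexivity.
Qed.

Lemma sum_perm_avg N n (a : 'I_N -> R) (e : 'I_n -> 'I_N) :
  \sum_(s : 'S_N) \sum_(j < n) a ((s^-1)%g (e j)) =
  #|'S_N|%:R * n%:R / N%:R * \sum_i a i.
Proof.
rewrite exchange_big /=.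
rewrite (eq_bigr (fun _ => #|'S_N|%:R / N%:R * \sum_i a i)); last by move=> j _; rewrite sum_perm_const.
by rewrite sumr_const card_ord -mulr_natr; ring.
Qed.


Lemma measurable_sumpow d (T : measurableType d) k (p : R) (u v : 'I_k -> T -> R) :
  (forall i, measurable_fun setT (u i)) -> (forall i, measurable_fun setT (v i)) ->
  measurable_fun setT (fun t => \sum_(i < k) `|u i t - v i t| `^ p).
Proof.
move=> mu mv; apply: measurable_sum => i.
apply: (measurableT_comp (measurable_powR _)).
apply: measurableT_comp; first exact: normr_measurable.
exact: measurable_funB.
Qed.

Lemma measurable_pdist_l n (p : R) (y : n.-tuple R) :
  measurable_fun setT (fun x : n.-tuple R => pdist p x y).
Proof.
rewrite /pdist; apply: (measurableT_comp (measurable_powR _)).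
apply: (@measurable_sumpow _ _ n p (fun i x => tnth x i) (fun i _ => tnth y i)) => i.
  exact: measurable_tnth.
exact: measurable_cst.
Qed.


Definition qseq n (k : nat) : n.-tuple R :=
  match (unpickle k : option (nat * n.-tuple int)) with
  | Some (m, z) => [tuple (tnth z i)%:~R / (m.+1)%:R | i < n]
  | None => [tuple 0 | _ < n]
  end.

Lemma qseq_approx n (x : n.-tuple R) (d : R) : 0 < d ->
  exists k, forall i, `|tnth x i - tnth (qseq n k) i| < d.
Proof.
move=> d0.
pose m := Num.bound (d^-1).
have hm : d^-1 < m%:R by apply: archi_boundP; rewrite invr_ge0 ltW.
pose z := [tuple Num.floor (tnth x i * (m.+1)%:R) | i < n].
exists (pickle (m, z)) => i; rewrite /qseq pickleK !tnth_mktuple.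
set M := (m.+1)%:R : R.
have M0 : 0 < M by rewrite ltr0n.
set y := tnth x i * M.
have h1 := real_floor_le (num_real y).
have h2 := real_floorD1_gt (num_real y).
have -> : tnth x i = y / M by rewrite /y mulfK ?gt_eqF.
rewrite -mulrBl normrM [`|M^-1|]ger0_norm ?invr_ge0 ?(ltW M0) //.
rewrite [`|y - _|]ger0_norm ?subr_ge0 //.
have h3 : y - (Num.floor y)%:~R < 1 by rewrite ltrBlDl; move: h2; rewrite intrD.
apply: (lt_le_trans (y := M^-1)).
  by rewrite ltr_pdivrMr // mulVf ?gt_eqF.
rewrite -[X in _ <= X]invrK lef_pV2 ?posrE ?invr_gt0 //.
by apply: (le_trans (ltW hm)); rewrite /M ler_nat.
Qed.


Lemma pdist_small n (p eps : R) (x y : n.-tuple R) : 1 <= p -> 0 < eps ->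
  (forall i, `|tnth x i - tnth y i| < (eps `^ p / n.+1%:R) `^ p^-1) ->
  pdist p x y < eps.
Proof.
move=> p1 e0 H.
have p0 : 0 < p by apply: lt_le_trans p1.
have ep0 : 0 < eps `^ p by apply: powR_gt0.
have Hi : forall i, `|tnth x i - tnth y i| `^ p < eps `^ p / n.+1%:R.
  move=> i; have := gt0_ltr_powR p0 (normr_ge0 _) (powR_ge0 _ _) (H i).
  by rewrite -powRrM mulVf ?gt_eqF // powRr1 // divr_ge0 ?ltW.
have Hs : \sum_(i < n) `|tnth x i - tnth y i| `^ p < eps `^ p.
  apply: (le_lt_trans (y := n%:R * (eps `^ p / n.+1%:R))).
    rewrite mulr_natl -[X in _ *+ X](card_ord n) -sumr_const.
    by apply: ler_sum => i _; exact: ltW.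
  rewrite mulrCA gtr_pMr // ltr_pdivrMr ?ltr0n // mul1r ltr_nat //.
have s0 : 0 <= \sum_(i < n) `|tnth x i - tnth y i| `^ p.
  by apply: sumr_ge0 => i _; exact: powR_ge0.
have ip0 : 0 < p^-1 by rewrite invr_gt0.
rewrite /pdist; have := gt0_ltr_powR ip0 s0 (powR_ge0 _ _) Hs.
by rewrite -powRrM mulfV ?gt_eqF // powRr1 // ltW.
Qed.


Lemma pdistC n (p : R) (x y : n.-tuple R) : pdist p x y = pdist p y x.
Proof. by rewrite /pdist; congr (_ `^ _); apply: eq_bigr => i _; rewrite distrC. Qed.

Lemma lip_measurable n (p : R) (f : n.-tuple R -> R) :
  1 <= p -> lipschitz1_p p f -> measurable_fun setT f.
Proof.
move=> p1 Lf.
pose u x k := f (qseq n k) + pdist p x (qseq n k).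
have lb : forall x k, f x <= u x k.
  move=> x k; rewrite /u -lerBlDl; apply: le_trans (Lf _ _); exact: ler_norm.
have hf : f = fun x => infs (u x) 0.
  apply: funext => x; apply/le_anti/andP; split.
    apply: lb_le_inf; first by exists (u x 0%N), 0%N.
    by move=> _ [k _ <-]; exact: lb.
  apply/ler_addgt0Pr => e e0.
  have e20 : 0 < e / 2 by rewrite divr_gt0.
  have [k hk] := @qseq_approx n x _ (powR_gt0 (p^-1) (divr_gt0 (powR_gt0 p e20) (ltr0Sn _ n))).
  have hd := @pdist_small n p _ x _ p1 e20 hk.
  apply: (le_trans (y := u x k)).
    apply: ge_inf; last by exists k.
    by exists (f x) => _ [k' _ <-]; exact: lb.
  rewrite /u; have := Lf (qseq n k) x; rewrite pdistC => h.
  have h2 : f (qseq n k) <= f x + pdist p x (qseq n k).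
    by rewrite -lerBlDl; apply: le_trans h; exact: ler_norm.
  apply: (le_trans (y := f x + pdist p x (qseq n k) + pdist p x (qseq n k))); first by rewrite lerD2r.
  by rewrite -addrA lerD2l; rewrite [e]splitr lerD // ltW.
rewrite hf; apply: measurable_fun_infs.
  by move=> x _; exists (f x) => _ [k _ <-]; exact: lb.
move=> k; apply: measurable_funD; first exact: measurable_cst.
exact: measurable_pdist_l.
Qed.


Lemma measurable_PI N (I : {set 'I_N}) : measurable_fun setT (@PI R N I).
Proof.
apply/measurable_fun_tnthP => i.
rewrite (_ : _ \o _ = (fun x => tnth x (enum_val i))); last first.
  by apply: funext => x /=; rewrite /PI tnth_mktuple.
exact: measurable_tnth.
Qed.

Lemma measurable_Qperm N (s : 'S_N) : measurable_fun setT (@Qperm R N s).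
Proof.
apply/measurable_fun_tnthP => i.
rewrite (_ : _ \o _ = (fun x => tnth x ((s^-1)%g i))); last first.
  by apply: funext => x /=; rewrite /Qperm tnth_mktuple.
exact: measurable_tnth.
Qed.

Local Open Scope ereal_scope.

Lemma coupling_fst N (mu1 mu2 : probability (N.-tuple R) R)
    (g : probability (N.-tuple R * N.-tuple R)%type R) (G : N.-tuple R -> R) :
  is_coupling mu1 mu2 g -> measurable_fun setT G -> (exists M : R, forall x, `|G x| <= M)%R ->
  \int[mu1]_x (G x)%:E = \int[g]_z (G z.1)%:E.
Proof.
move=> [h1 h2] mG [M hM].
rewrite (eq_measure_integral (pushforward g fst)); last first.
  by move=> A mA _; exact: (esym (congr1 (fun m => m A) h1)).
rewrite (@integral_pushforward _ _ _ _ R fst (@measurable_fst _ _ _ _) g setT (EFin \o G)) //.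
- exact/measurable_EFinP.
- rewrite (_ : fst @^-1` _ = setT) //.
  apply: (measurable_bounded_integrable (f := fun z => G z.1)) => //.
  + exact: (eq_ind_r (fun x => x < +oo) (ltey 1) (probability_setT g)).
  + exact: (measurableT_comp mG (@measurable_fst _ _ _ _)).
  + exists M; split; first exact: num_real.
    move=> x Mx z _; apply: le_trans (hM _) _; exact: ltW.
Qed.

Lemma coupling_snd N (mu1 mu2 : probability (N.-tuple R) R)
    (g : probability (N.-tuple R * N.-tuple R)%type R) (G : N.-tuple R -> R) :
  is_coupling mu1 mu2 g -> measurable_fun setT G -> (exists M : R, forall x, `|G x| <= M)%R ->
  \int[mu2]_x (G x)%:E = \int[g]_z (G z.2)%:E.
Proof.
move=> [h1 h2] mG [M hM].
rewrite (eq_measure_integral (pushforward g snd)); last first.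
  by move=> A mA _; exact: (esym (congr1 (fun m => m A) h2)).
rewrite (@integral_pushforward _ _ _ _ R snd (@measurable_snd _ _ _ _) g setT (EFin \o G)) //.
- exact/measurable_EFinP.
- rewrite (_ : snd @^-1` _ = setT) //.
  apply: (measurable_bounded_integrable (f := fun z => G z.2)) => //.
  + exact: (eq_ind_r (fun x => x < +oo) (ltey 1) (probability_setT g)).
  + exact: (measurableT_comp mG (@measurable_snd _ _ _ _)).
  + exists M; split; first exact: num_real.
    move=> x Mx z _; apply: le_trans (hM _) _; exact: ltW.
Qed.


Definition Dfun (p : R) {N} (I : {set 'I_N}) (s : 'S_N) (z : N.-tuple R * N.-tuple R) : R :=
  (\sum_(j < #|I|) `|tnth z.1 ((s^-1)%g (enum_val j)) - tnth z.2 ((s^-1)%g (enum_val j))| `^ p)%R.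

Lemma measurable_Dfun (p : R) N (I : {set 'I_N}) (s : 'S_N) :
  measurable_fun setT (@Dfun p N I s).
Proof.
apply: (@measurable_sumpow _ _ #|I| p (fun j z => tnth z.1 ((s^-1)%g (enum_val j)))
                                   (fun j z => tnth z.2 ((s^-1)%g (enum_val j)))) => j.
  exact: (measurableT_comp (measurable_tnth _) (@measurable_fst _ _ _ _)).
exact: (measurableT_comp (measurable_tnth _) (@measurable_snd _ _ _ _)).
Qed.

Lemma key_bound (p : R) N (mu1 mu2 : probability (N.-tuple R) R) (I : {set 'I_N})
    (f : #|I|.-tuple R -> R) g :
  (1 <= p)%R -> perm_invariant mu1 -> perm_invariant mu2 ->
  (exists M : R, forall x, `|f x| <= M)%R -> lipschitz1_p p f -> is_coupling mu1 mu2 g ->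
  forall l : R, (0 < l)%R -> forall s : 'S_N,
  `| \int[mu1]_x (f (PI I x))%:E - \int[mu2]_x (f (PI I x))%:E | <=
  \int[g]_z (l `^ p^-1 * (Dfun p I s z / (p * l) + (1 - p^-1)))%:E.
Proof.
move=> p1 pi1 pi2 [M hM] Lf hc l l0 s.
have p0 : (0 < p)%R by apply: lt_le_trans p1.
pose F := fun x => f (PI I x).
have mf := @lip_measurable _ _ _ p1 Lf.
have mF : measurable_fun setT F := measurableT_comp mf (@measurable_PI N I).
have mFs : measurable_fun setT (F \o Qperm s) := measurableT_comp mF (@measurable_Qperm N s).
have bFs : exists M : R, forall x, (`|(F \o Qperm s) x| <= M)%R by exists M => x; exact: hM.
have intF : forall mu : probability (N.-tuple R) R, mu.-integrable setT (EFin \o F).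
  move=> mu; apply: measurable_bounded_integrable => //.
    exact: (eq_ind_r (fun x => x < +oo) (ltey 1) (probability_setT mu)).
  exists M; split; first exact: num_real.
  by move=> x Mx z _; apply: le_trans (hM _) _; exact: ltW.
have e1 : \int[mu1]_x (F x)%:E = \int[mu1]_x ((F \o Qperm s) x)%:E.
  by have := (pi1 s _ (intF mu1)).2 => ->.
have e2 : \int[mu2]_x (F x)%:E = \int[mu2]_x ((F \o Qperm s) x)%:E.
  by have := (pi2 s _ (intF mu2)).2 => ->.
rewrite -/F e1 e2 (@coupling_fst N _ _ _ _ hc mFs bFs) (@coupling_snd N _ _ _ _ hc mFs bFs).
have intg : forall h : N.-tuple R * N.-tuple R -> R, measurable_fun setT h ->
    (exists M : R, forall x, (`|h x| <= M)%R) -> g.-integrable setT (EFin \o h).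
  move=> h mh [M' hM']; apply: measurable_bounded_integrable => //.
    exact: (eq_ind_r (fun x => x < +oo) (ltey 1) (probability_setT g)).
  exists M'; split; first exact: num_real.
  by move=> x Mx z _; apply: le_trans (hM' _) _; exact: ltW.
have m1 : measurable_fun setT (fun z : N.-tuple R * N.-tuple R => (F \o Qperm s) z.1).
  exact: (measurableT_comp mFs (@measurable_fst _ _ _ _)).
have m2 : measurable_fun setT (fun z : N.-tuple R * N.-tuple R => (F \o Qperm s) z.2).
  exact: (measurableT_comp mFs (@measurable_snd _ _ _ _)).
rewrite -(integralB _ (intg _ m1 _) (intg _ m2 _)) //; try by exists M => x; exact: hM.
apply: le_trans; first apply: le_abse_integral => //.
  by apply/measurable_EFinP; apply: measurable_funB.
apply: ge0_le_integral => //.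
- by apply: measurableT_comp => //; apply/measurable_EFinP; apply: measurable_funB.
- apply/measurable_EFinP; apply: measurable_funM; first exact: measurable_cst.
  apply: measurable_funD; last exact: measurable_cst.
  apply: measurable_funM; last exact: measurable_cst.
  exact: measurable_Dfun.
move=> z _ /=.
rewrite lee_fin.
apply: le_trans; first exact: (Lf (PI I (Qperm s z.1)) (PI I (Qperm s z.2))).
have -> : pdist p (PI I (Qperm s z.1)) (PI I (Qperm s z.2)) = (Dfun p I s z `^ p^-1)%R.
  rewrite /pdist /Dfun; congr (powR _ _).
  by apply: eq_bigr => j _; rewrite /PI /Qperm !tnth_mktuple.
apply: tangent_pow => //.
by apply: sumr_ge0 => j _; exact: powR_ge0.
Qed.


Local Close Scope ereal_scope.
Lemma real_fin (p a m : R) : (1 <= p)%R -> (0 <= a)%R -> (0 <= m)%R ->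
  (forall l, 0 < l -> m <= l `^ p^-1 * (a / (p * l) + (1 - p^-1)))%R ->
  (m `^ p <= a)%R.
Proof.
move=> p1 a0 m0 H.
have p0 : (0 < p)%R by apply: lt_le_trans p1.
apply/ler_addgt0Pr => e e0.
have l0 : (0 < a + e)%R by apply: (lt_le_trans e0); rewrite -{1}[e]add0r lerD2r.
have := H _ l0.
have hb : (a / (p * (a + e)) + (1 - p^-1) <= 1)%R.
  have h1 : a / (a + e) <= 1 by rewrite ler_pdivrMr // mul1r -{1}[a]addr0 lerD2l ltW.
  have h2 : a / (p * (a + e)) = p^-1 * (a / (a + e)) by rewrite invfM mulrCA.
  rewrite h2; apply: (le_trans (y := p^-1 * 1 + (1 - p^-1))); last by rewrite mulr1 addrC subrK.
  by rewrite lerD2r ler_wpM2l // invr_ge0 ltW.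
move=> hm.
have hm2 : (m <= (a + e) `^ p^-1)%R.
  apply: le_trans hm _; rewrite -[X in (_ <= X)%R]mulr1 ler_wpM2l ?powR_ge0 //.
have := ge0_ler_powR (ltW p0) m0 (powR_ge0 _ _) hm2.
by rewrite -powRrM mulVf ?gt_eqF // powRr1 // ltW.
Qed.


Definition Cfun (p : R) {N} (z : N.-tuple R * N.-tuple R) : R :=
  ((N%:R)^-1 * \sum_(i < N) `|tnth z.1 i - tnth z.2 i| `^ p)%R.

Lemma measurable_Cfun (p : R) N : measurable_fun setT (@Cfun p N).
Proof.
apply: measurable_funM; first exact: measurable_cst.
apply: (@measurable_sumpow _ _ N p (fun j z => tnth z.1 j) (fun j z => tnth z.2 j)) => j.
  exact: (measurableT_comp (measurable_tnth _) (@measurable_fst _ _ _ _)).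
exact: (measurableT_comp (measurable_tnth _) (@measurable_snd _ _ _ _)).
Qed.

Lemma Cfun_ge0 (p : R) N z : (0 <= @Cfun p N z)%R.
Proof.
by rewrite /Cfun mulr_ge0 ?invr_ge0 // sumr_ge0 // => i _; exact: powR_ge0.
Qed.

Lemma sum_Dfun (p : R) N (I : {set 'I_N}) z :
  (\sum_(s : 'S_N) Dfun p I s z = #|'S_N|%:R * #|I|%:R * Cfun p z)%R.
Proof.
rewrite /Dfun /Cfun.
rewrite (@sum_perm_avg N #|I| (fun i => `|tnth z.1 i - tnth z.2 i| `^ p) enum_val).
by rewrite mulrA.
Qed.

Local Open Scope ereal_scope.
Lemma integral_affine d (T : measurableType d) (g : probability T R) (h : T -> R) (a b : R) :
  measurable_fun setT h -> (forall z, 0 <= h z)%R -> (0 <= a)%R -> (0 <= b)%R ->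
  \int[g]_z (a * h z + b)%:E = a%:E * \int[g]_z (h z)%:E + b%:E.
Proof.
move=> mh h0 a0 b0.
under eq_integral do rewrite EFinD EFinM.
rewrite ge0_integralD //; try by move=> z _; rewrite lee_fin ?mulr_ge0.
  2: by apply/measurable_EFinP; apply: measurable_funM => //; exact: measurable_cst.
rewrite ge0_integralZl //; try by move=> z _; rewrite lee_fin.
  2: exact/measurable_EFinP.
rewrite integral_cst //.
by rewrite (eq_ind_r (fun x => b%:E * x = b%:E) (mule1 _) (probability_setT g)).
Qed.


Lemma key_final (p : R) N (mu1 mu2 : probability (N.-tuple R) R) (I : {set 'I_N})
    (f : #|I|.-tuple R -> R) g :
  (1 <= p)%R -> perm_invariant mu1 -> perm_invariant mu2 ->
  (exists M : R, forall x, `|f x| <= M)%R -> lipschitz1_p p f -> (0 < #|I|)%N ->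
  is_coupling mu1 mu2 g ->
  ((`|fine (\int[mu1]_x (f (PI I x))%:E) - fine (\int[mu2]_x (f (PI I x))%:E)|) `^ p)%:E
    <= #|I|%:R%:E * \int[g]_z (Cfun p z)%:E.
Proof.
move=> p1 pi1 pi2 [M hM] Lf n0 hc.
have p0 : (0 < p)%R by apply: lt_le_trans p1.
have c0 : (0 <= 1 - p^-1)%R by rewrite subr_ge0 invf_le1.
pose F := fun x => f (PI I x).
have mf := @lip_measurable _ _ _ p1 Lf.
have mF : measurable_fun setT F := measurableT_comp mf (@measurable_PI N I).
have intF : forall mu : probability (N.-tuple R) R, mu.-integrable setT (EFin \o F).
  move=> mu; apply: measurable_bounded_integrable => //.
    exact: (eq_ind_r (fun x => x < +oo) (ltey 1) (probability_setT mu)).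
  exists M; split; first exact: num_real.
  by move=> x Mx z _; apply: le_trans (hM _) _; exact: ltW.
have fin1 := integrable_fin_num measurableT (intF mu1).
have fin2 := integrable_fin_num measurableT (intF mu2).
set X1 := \int[mu1]_x (f (PI I x))%:E in fin1 *.
set X2 := \int[mu2]_x (f (PI I x))%:E in fin2 *.
set m := `|fine X1 - fine X2|%R.
have EC0 : 0 <= \int[g]_z (Cfun p z)%:E.
  by apply: integral_ge0 => z _; rewrite lee_fin Cfun_ge0.
have nR0 : (0 < #|I|%:R :> R)%R by rewrite ltr0n.
case EC : (\int[g]_z (Cfun p z)%:E) EC0 => [e| |] // EC0.
  2: by rewrite gt0_muley ?lee_fin ?leey // lte_fin.
rewrite -EFinM lee_fin; apply: real_fin => //.
  by rewrite mulr_ge0 // ltW.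
  exact: normr_ge0.
move=> l l0.
have S0 : (0 < #|'S_N|)%N by apply/card_gt0P; exists 1%g.
have SR0 : (0 < #|'S_N|%:R :> R)%R by rewrite ltr0n.
have hsum : \sum_(s : 'S_N) `|X1 - X2| <=
    \sum_(s : 'S_N) \int[g]_z (l `^ p^-1 * (Dfun p I s z / (p * l) + (1 - p^-1)))%:E.
  by apply: lee_sum => s _; exact: (@key_bound p N mu1 mu2 I f g p1 pi1 pi2 (ex_intro _ M hM) Lf hc l l0 s).
rewrite -ge0_integral_sum in hsum; last 2 first.
- move=> s; apply/measurable_EFinP; apply: measurable_funM; first exact: measurable_cst.
  apply: measurable_funD; last exact: measurable_cst.
  apply: measurable_funM; last exact: measurable_cst.
  exact: measurable_Dfun.
- move=> s z _; rewrite lee_fin mulr_ge0 ?powR_ge0 // addr_ge0 // divr_ge0 //.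
    by apply: sumr_ge0 => j _; exact: powR_ge0.
  by rewrite mulr_ge0 // ltW.
have hpt : forall z, (\sum_(s : 'S_N) (l `^ p^-1 * (Dfun p I s z / (p * l) + (1 - p^-1)))%:E) =
    ((l `^ p^-1 * #|'S_N|%:R * #|I|%:R / (p * l)) * Cfun p z + l `^ p^-1 * #|'S_N|%:R * (1 - p^-1))%:E.
  move=> z; rewrite sumEFin; congr EFin.
  rewrite -mulr_sumr big_split /= -mulr_suml sum_Dfun sumr_const.
  rewrite -mulr_natl; ring.
have e3 := @eq_integral _ _ _ g setT _ _ (fun z _ => hpt z).
rewrite e3 in hsum.
rewrite integral_affine in hsum; last 4 first.
- exact: measurable_Cfun.
- exact: Cfun_ge0.
- by rewrite !mulr_ge0 ?powR_ge0 ?invr_ge0 ?mulr_ge0 // ltW.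
- by rewrite !mulr_ge0 ?powR_ge0.
have hX : `|X1 - X2| = m%:E by rewrite -(fineK fin1) -(fineK fin2) -EFinB.
rewrite hX EC sumEFin sumr_const -EFinM -EFinD lee_fin in hsum.
rewrite -(ler_pM2l SR0) [X in (X <= _)%R]mulr_natl; apply: le_trans hsum _.
by rewrite le_eqVlt; apply/orP; left; apply/eqP; ring.
exact: measurableT.
Qed.

Lemma int_fin (p : R) N (mu : probability (N.-tuple R) R) (I : {set 'I_N})
    (f : #|I|.-tuple R -> R) :
  (1 <= p)%R -> (exists M : R, forall x, `|f x| <= M)%R -> lipschitz1_p p f ->
  \int[mu]_x (f (PI I x))%:E \is a fin_num.
Proof.
move=> p1 [M hM] Lf.
have mf := @lip_measurable _ _ _ p1 Lf.
have mF : measurable_fun setT (fun x => f (PI I x)) := measurableT_comp mf (@measurable_PI N I).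
apply: (integrable_fin_num measurableT).
apply: measurable_bounded_integrable => //.
  exact: (eq_ind_r (fun x => x < +oo) (ltey 1) (probability_setT mu)).
exists M; split; first exact: num_real.
by move=> x Mx z _; apply: le_trans (hM _) _; exact: ltW.
Qed.

End aux.

Local Close Scope ereal_scope.

Theorem lemma2p3 (R : realType) (p : R) (N : nat)
    (mu1 mu2 : probability (N.-tuple R) R) (I : {set 'I_N})
    (f : #|I|.-tuple R -> R) :
  1 <= p ->
  perm_invariant mu1 -> perm_invariant mu2 ->
  finite_pmoment p mu1 -> finite_pmoment p mu2 ->
  (#|I| < N)%N ->
  (exists M : R, forall x, `|f x| <= M) ->
  lipschitz1_p p f ->
  (`| \int[mu1]_x (f (PI I x))%:E - \int[mu2]_x (f (PI I x))%:E |
     <= ((#|I|%:R / (1 - #|I|%:R / N%:R)) `^ p^-1)%:E * wp p mu1 mu2)%E.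
Proof.
move=> p1 pi1 pi2 _ _ nN [M hM] Lf.
have p0 : (0 < p)%R by apply: lt_le_trans p1.
have [n0|n0] := posnP #|I|.
  pose t0 : #|I|.-tuple R := [tuple 0%R | _ < #|I|].
  have hc : forall x, f (PI I x) = f t0.
    move=> x; congr f; apply: eq_from_tnth => -[i hi].
    by exfalso; move: hi; rewrite n0.
  have hi : forall mu : probability (N.-tuple R) R, (\int[mu]_x (f (PI I x))%:E = (f t0)%:E)%E.
    move=> mu; under eq_integral do rewrite hc.
    rewrite integral_cst //.
    exact: (eq_ind_r (fun x => (f t0)%:E * x = (f t0)%:E)%E (mule1 _) (probability_setT mu)).
  rewrite !hi -EFinB subrr /=. rewrite normr0.
  by apply: mule_ge0; [rewrite lee_fin powR_ge0 | exact: poweR_ge0].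
have fin1 := @int_fin R p N mu1 I f p1 (ex_intro _ M hM) Lf.
have fin2 := @int_fin R p N mu2 I f p1 (ex_intro _ M hM) Lf.
have hkey := fun g => @key_final R p N mu1 mu2 I f g p1 pi1 pi2 (ex_intro _ M hM) Lf n0.
set X1 := (\int[mu1]_x (f (PI I x))%:E)%E in fin1 hkey *.
set X2 := (\int[mu2]_x (f (PI I x))%:E)%E in fin2 hkey *.
set m := `|fine X1 - fine X2| in hkey *.
have hX : (`|X1 - X2| = m%:E)%E by rewrite -(fineK fin1) -(fineK fin2) -EFinB.
have nR0 : (0 < #|I|%:R :> R)%R by rewrite ltr0n.
rewrite hX /wp.
set W := ereal_inf _.
have hW : ((m `^ p / #|I|%:R)%:E <= W)%E.
  apply: le_ereal_inf_tmp => _ [g hg <-].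
  have := hkey g hg; rewrite /Cfun.
  case: (\int[g]_z _)%E => [y| |] /=.
  - by rewrite -EFinM !lee_fin => h; rewrite ler_pdivrMr // mulrC.
  - by rewrite leey.
  - by rewrite gt0_muleNy ?lte_fin // leeNy_eq.
clearbody W.
have NR0 : (0 < N%:R :> R)%R by rewrite ltr0n; apply: leq_ltn_trans nN.
have hN : 0 < 1 - #|I|%:R / N%:R :> R by rewrite subr_gt0 ltr_pdivrMr // mul1r ltr_nat.
set K := #|I|%:R / (1 - #|I|%:R / N%:R).
have K0 : 0 < K by rewrite divr_gt0.
have Kn : #|I|%:R <= K.
  rewrite /K ler_pdivlMr // -[X in _ <= X]mulr1 ler_wpM2l ?ltW //.
  have : 0 < #|I|%:R / N%:R :> R by rewrite divr_gt0.
  lra.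
have m0 : 0 <= m by apply: normr_ge0.
have ip0 : 0 < p^-1 by rewrite invr_gt0.
case: W hW => [w| |] hW.
- have hw : m `^ p <= #|I|%:R * w by rewrite lee_fin ler_pdivrMr // mulrC in hW.
  have w0 : 0 <= w.
    by rewrite -(pmulr_rge0 _ nR0); apply: le_trans hw; exact: powR_ge0.
  rewrite poweR_EFin -EFinM lee_fin -powRM //; last exact: ltW.
  have -> : m = (m `^ p) `^ p^-1 by rewrite -powRrM mulfV ?gt_eqF // powRr1.
  apply: (ge0_ler_powR (ltW ip0)); rewrite ?nnegrE ?powR_ge0 //.
    by rewrite mulr_ge0 // ltW.
  apply: le_trans hw _; exact: ler_wpM2r.
- by rewrite poweRyr ?invr_neq0 ?gt_eqF // gt0_muley ?lte_fin ?powR_gt0 // leey.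
- by rewrite leeNy_eq in hW.
Qed.
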